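(* Let $G=(V,E)$ be a directed graph with positive edge weights (channel fees), let $n\in V$, let $f_{max}\ge 1$, and let $\mathcal{CH}\subseteq E$ be a set of edges out of $n$ (previously selected channels), each $Ch\in\mathcal{CH}$ having fee $f(Ch)\in[1,f_{max}]$. Let $n_i\in V\setminus\{n\}$ be such that the edge $(n,n_i)$ is not in $\mathcal{CH}$, and for $x\in[1,f_{max}]$ let $G_i^{x}$ denote the graph obtained from $G$ by adding the edge $(n,n_i)$ with weight $x$. Define $$\mathsf{TotalER}(x)= x\cdot \mathrm{ebc}_{G_i^{x}}((n,n_i)) + \sum_{Ch\in\mathcal{CH}} f(Ch)\cdot \mathrm{ebc}_{G_i^{x}}(Ch).$$ Then $$\max_{x\in[1,f_{max}]} \mathsf{TotalER}(x) \;\ge\; \sum_{Ch\in\mathcal{CH}} f(Ch)\cdot \mathrm{ebc}_{G}(Ch),$$ i.e., the objective of the greedy channel selection (adding a channel to $\mathcal{CH}$ with its best fee) is monotone non-decreasing.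
   Context: Shortest paths are minimum-total-weight directed paths. In a weighted directed graph $H$, for vertices $s\neq t$, $\sigma_{st}$ denotes the number of shortest paths from $s$ to $t$, and for an edge $e$, $\sigma_{st[e]}$ denotes the number of those shortest paths containing $e$. The edge betweenness centrality is $\mathrm{ebc}_{H}(e)=\sum_{s\neq t,\ \sigma_{st}\neq 0} \frac{\sigma_{st[e]}}{\sigma_{st}}$. The quantity $f(Ch)\cdot\mathrm{ebc}(Ch)$ is the expected reward of channel $Ch$ in a payment channel network where payments follow cheapest paths. *)

(* Defs.v *)
From mathcomp Require Import all_boot all_order all_algebra.
Set Implicit Arguments. Unset Strict Implicit. Unset Printing Implicit Defensive.
Import Order.TTheory GRing.Theory Num.Theory.
Local Open Scope ring_scope.

Section Graph.
Variables (R : realFieldType) (V Ed : finType) (src tgt : Ed -> V) (w : Ed -> R).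

Definition all_edge_seqs : seq (seq Ed) :=
  flatten [seq [seq tval t | t <- enum {: k.-tuple Ed}] | k <- iota 0 #|Ed|.+1].

Fixpoint walk_from (x : V) (p : seq Ed) : bool :=
  if p is e :: p' then (src e == x) && walk_from (tgt e) p' else true.

Definition is_path_st (s t : V) (p : seq Ed) : bool :=
  [&& uniq p, p != [::], walk_from s p & last s (map tgt p) == t].

Definition pweight (p : seq Ed) : R := \sum_(e <- p) w e.

Definition paths_st (s t : V) : seq (seq Ed) :=
  [seq p <- all_edge_seqs | is_path_st s t p].

Definition shortest (s t : V) (p : seq Ed) : bool :=
  is_path_st s t p && all (fun q => pweight p <= pweight q) (paths_st s t).

Definition sigma (s t : V) : nat := count (shortest s t) all_edge_seqs.

Definition sigma_e (s t : V) (e : Ed) : nat :=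
  count (fun p => shortest s t p && (e \in p)) all_edge_seqs.

Definition ebc (e : Ed) : R :=
  \sum_(s : V) \sum_(t : V | (s != t) && (sigma s t != 0%N))
     (sigma_e s t e)%:R / (sigma s t)%:R.

End Graph.

(* The graph G_i^x: G plus a new edge (None) from n to ni with weight x. *)
Definition add_src (V Ed : Type) (src : Ed -> V) (n : V) (e : option Ed) : V :=
  if e is Some e' then src e' else n.
Definition add_tgt (V Ed : Type) (tgt : Ed -> V) (ni : V) (e : option Ed) : V :=
  if e is Some e' then tgt e' else ni.
Definition add_w (R Ed : Type) (w : Ed -> R) (x : R) (e : option Ed) : R :=
  if e is Some e' then w e' else x.

(* Main.v *)
Require Import Defs.
From mathcomp Require Import all_boot all_order all_algebra.
From mathcomp Require Import zify ring lra.
Import Order.TTheory GRing.Theory Num.Theory.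
Set Implicit Arguments. Unset Strict Implicit. Unset Printing Implicit Defensive.

Lemma aes_uniq (T : finType) : uniq (all_edge_seqs T).
Proof.
rewrite /all_edge_seqs.
apply: allpairs_uniq_dep.
- exact: iota_uniq.
- move=> k _; exact: enum_uniq.
- move=> [k1 t1] [k2 t2] _ _ /= E.
  have Ek : k1 = k2 by rewrite -(size_tuple t1) -(size_tuple t2) E.
  subst k2; congr existT; exact: val_inj.
Qed.

Lemma mem_aes (T : finType) (p : seq T) : uniq p -> p \in all_edge_seqs T.
Proof.
move=> up; rewrite /all_edge_seqs; apply/flatten_mapP.
exists (size p).
  by rewrite mem_iota /= add0n ltnS -(card_uniqP up) max_card.
apply/mapP; exists (in_tuple p); first by rewrite mem_enum.
by [].
Qed.

Lemma pmap_Some (T : eqType) (p : seq (option T)) :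
  None \notin p -> map Some (pmap id p) = p.
Proof.
elim: p => //= [[a|] p IH]; rewrite in_cons /=.
  by move=> H; rewrite IH.
by [].
Qed.

Lemma count_lift (T : finType) (P : pred (seq T)) (Q : pred (seq (option T))) :
  (forall q, P q -> uniq q) -> (forall p, Q p -> None \notin p) ->
  (forall q, Q (map Some q) = P q) ->
  count Q (all_edge_seqs (option T)) = count P (all_edge_seqs T).
Proof.
move=> PU QN QP.
rewrite -!size_filter.
rewrite -(size_map (map Some) [seq x <- all_edge_seqs T | P x]).
apply: perm_size; apply: uniq_perm.
- exact: filter_uniq (aes_uniq _).
- rewrite map_inj_uniq; first exact: filter_uniq (aes_uniq _).
  exact: inj_map Some_inj.
move=> p; rewrite mem_filter; apply/andP/mapP.
- move=> [Qp _]; exists (pmap id p); last by rewrite pmap_Some // QN.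
  have Pq : P (pmap id p) by rewrite -QP pmap_Some // QN.
  by rewrite mem_filter Pq mem_aes // PU.
- move=> [q]; rewrite mem_filter => /andP[Pq _] ->; split; first by rewrite QP.
  apply: mem_aes; rewrite map_inj_uniq ?PU //; exact: Some_inj.
Qed.

Lemma count_split (T : Type) (P Q : pred T) s :
  count P s = (count (fun p => P p && ~~ Q p) s + count (fun p => P p && Q p) s)%N.
Proof.
elim: s => //= a s ->; case: (P a); case: (Q a) => /=; rewrite ?addnA; lia.
Qed.

Lemma exists_min (R : realFieldType) (T : eqType) (f : T -> R) (l : seq T) (a : T) :
  a \in l -> exists2 m, m \in l & all (fun q => (f m <= f q)%R) l.
Proof.
elim: l a => // b l IH a _.
case: l IH => [|c l] IH.
  by exists b; rewrite ?mem_head //= lexx.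
have [m ml /allP Hm] := IH c (mem_head _ _).
case: (leP (f b) (f m)) => H.
- exists b; first exact: mem_head.
  apply/allP => q; rewrite in_cons => /predU1P[-> | ql]; first exact: lexx.
  exact: le_trans H (Hm q ql).
- exists m; first by rewrite in_cons ml orbT.
  apply/allP => q; rewrite in_cons => /predU1P[-> | ql]; first exact: ltW.
  exact: Hm.
Qed.

Section Old.
Variables (R : realFieldType) (V Ed : finType) (src tgt : Ed -> V) (w : Ed -> R).
Local Open Scope ring_scope.

Lemma walk_from_cat x a b :
  walk_from src tgt x (a ++ b) =
  walk_from src tgt x a && walk_from src tgt (last x (map tgt a)) b.
Proof. by elim: a x => //= e a IH x; rewrite IH andbA. Qed.

Lemma path_in s t q : is_path_st src tgt s t q -> q \in paths_st src tgt s t.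
Proof.
move=> H; rewrite mem_filter H mem_aes //.
by case/and4P: H.
Qed.

Lemma shortest_core s t a e1 b e2 c :
  (forall e, 0 < w e) ->
  shortest src tgt w s t (a ++ e1 :: b ++ e2 :: c) -> src e1 = src e2 -> False.
Proof.
move=> wpos /andP[Hp Hall] E.
set p' := a ++ e2 :: c.
have Hp' : is_path_st src tgt s t p'.
  case/and4P: Hp => U _ W L.
  apply/and4P; split.
  - apply: subseq_uniq U; rewrite /p' subseq_cat2l.
    exact: (suffix_subseq (e1 :: b) (e2 :: c)).
  - by rewrite /p' -size_eq0 size_cat /= addnS.
  - move: W; rewrite /p' !walk_from_cat /= walk_from_cat /= -E.
    by case/and5P=> -> -> _ _ ->.
  - by move: L; rewrite /p' !map_cat !last_cat /= map_cat last_cat.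
have := allP Hall p' (path_in Hp').
rewrite /pweight /p' !big_cat !big_cons big_cat big_cons /=.
have hb : 0 <= \sum_(e <- b) w e by apply: sumr_ge0 => e _; apply: ltW.
have := wpos e1; lra.
Qed.

Lemma shortest_one s t p e1 e2 :
  (forall e, 0 < w e) ->
  shortest src tgt w s t p -> e1 \in p -> e2 \in p -> src e1 = src e2 -> e1 = e2.
Proof.
move=> wpos Sh i1 i2 E; apply/eqP/negPn/negP => ne.
case/splitPr: i1 Sh i2 => p1 p2 Sh.
have ne' : (e2 == e1) = false by rewrite eq_sym; apply: negbTE.
rewrite mem_cat in_cons ne' /=.
case/orP.
- move=> H; case/splitPr: H Sh => a b Sh.
  rewrite -catA /= in Sh; exact: (shortest_core wpos Sh (esym E)).
- move=> H; case/splitPr: H Sh => b c Sh.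
  exact: (shortest_core wpos Sh).
Qed.
End Old.

Lemma sum_sigma_e_le (R : realFieldType) (V Ed : finType) (src tgt : Ed -> V)
  (w : Ed -> R) s t (CH : {set Ed}) n :
  (forall e, (0 < w e)%R) -> (forall Ch, Ch \in CH -> src Ch = n) ->
  (\sum_(Ch in CH) sigma_e src tgt w s t Ch <= sigma src tgt w s t)%N.
Proof.
move=> wpos HC; rewrite /sigma_e /sigma.
elim: (all_edge_seqs Ed) => [|p L IH] /=.
  by rewrite big1.
rewrite big_split /=; apply: leq_add => //.
case Sp: (shortest src tgt w s t p) => /=; last by rewrite big1.
case: (pickP [pred Ch in CH | Ch \in p]) => [c /andP[cC cp] | none].
- rewrite (bigD1 c) //= cp big1 // => Ch /andP[ChC ne].
  case Chp: (Ch \in p) => //; case/eqP: ne.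
  apply: (shortest_one wpos Sp Chp cp); by rewrite !HC.
- rewrite big1 // => Ch ChC; have := none Ch; rewrite /= ChC /= => ->.
  by [].
Qed.

Lemma noneN (T : eqType) (q : seq T) : (None \in map Some q) = false.
Proof. by elim: q. Qed.

Section New.
Variables (R : realFieldType) (V Ed : finType) (src tgt : Ed -> V) (w : Ed -> R)
  (n ni : V) (x : R).
Local Open Scope ring_scope.
Let src' := add_src src n.
Let tgt' := add_tgt tgt ni.
Let w' := add_w w x.

Lemma walk_lift v q : walk_from src' tgt' v (map Some q) = walk_from src tgt v q.
Proof. by elim: q v => //= e q IH v; rewrite IH. Qed.

Lemma path_lift s t q :
  is_path_st src' tgt' s t (map Some q) = is_path_st src tgt s t q.
Proof.
rewrite /is_path_st map_inj_uniq; last exact: Some_inj.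
rewrite walk_lift -map_comp; congr [&& _, _, _ & _]; first by case: q.
Qed.

Lemma weight_lift q : pweight w' (map Some q) = pweight w q.
Proof. by rewrite /pweight big_map. Qed.

Lemma S_to_A s t r :
  shortest src' tgt' w' s t (map Some r) -> shortest src tgt w s t r.
Proof.
case/andP; rewrite path_lift => Hr /allP Hall; rewrite /shortest Hr /=.
apply/allP => q; rewrite mem_filter => /andP[Hq _].
rewrite -!weight_lift; apply: Hall; apply: path_in; by rewrite path_lift.
Qed.

Lemma A_to_S s t q0 r :
  shortest src tgt w s t q0 -> shortest src' tgt' w' s t (map Some q0) ->
  shortest src tgt w s t r -> shortest src' tgt' w' s t (map Some r).
Proof.
move=> /andP[Hq0 /allP A0] /andP[_ /allP S0] /andP[Hr /allP Ar].
rewrite /shortest path_lift Hr /=; apply/allP => p Hp.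
have e : pweight w r = pweight w q0.
  by apply/eqP; rewrite eq_le Ar ?A0 // path_in.
by rewrite weight_lift e -weight_lift S0.
Qed.


Lemma sigma'_split s t :
  sigma src' tgt' w' s t =
  (count (fun q => shortest src' tgt' w' s t (map Some q)) (all_edge_seqs Ed)
   + sigma_e src' tgt' w' s t None)%N.
Proof.
rewrite /sigma /sigma_e (count_split _ (fun p => None \in p)); congr addn.
apply: count_lift.
- by move=> q /S_to_A /andP[/and4P[]].
- by move=> p /andP[].
- by move=> q /=; rewrite noneN andbT.
Qed.

Lemma sigma_e'_ge s t Ch :
  (count (fun q => shortest src' tgt' w' s t (map Some q) && (Ch \in q))
     (all_edge_seqs Ed) <= sigma_e src' tgt' w' s t (Some Ch))%N.
Proof.
rewrite /sigma_e (count_split _ (fun p => None \in p)).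
apply: leq_trans (leq_addr _ _); rewrite (@count_lift _
  (fun q => shortest src' tgt' w' s t (map Some q) && (Ch \in q))) //.
- by move=> q /andP[/S_to_A /andP[/and4P[]]].
- by move=> p /andP[].
- by move=> q /=; rewrite noneN andbT (mem_map Some_inj).
Qed.

End New.

Lemma mediant (R : realFieldType) (x B s K : R) :
  (0 < s -> 0 <= K -> B <= x * s -> B / s <= x * (K / (s + K)) + B / (s + K))%R.
Proof.
move=> sp Kp HB; rewrite -subr_ge0.
have sK : (0 < s + K)%R by apply: ltr_wpDr.
have -> : (x * (K / (s + K)) + B / (s + K) - B / s =
           K * (x * s - B) / (s * (s + K)))%R.
  by field; apply/andP; split; rewrite ?lt0r_neq0.
apply: divr_ge0; first by apply: mulr_ge0 => //; rewrite subr_ge0.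
by apply: mulr_ge0; apply: ltW.
Qed.

Section Pair.
Variables (R : realFieldType) (V Ed : finType) (src tgt : Ed -> V) (w : Ed -> R)
  (n ni : V) (x : R).
Local Open Scope ring_scope.
Let src' := add_src src n.
Let tgt' := add_tgt tgt ni.
Let w' := add_w w x.

Lemma k_pos s t q : shortest src tgt w s t q ->
  (forall r, ~~ shortest src' tgt' w' s t (map Some r)) ->
  (0 < sigma_e src' tgt' w' s t None)%N.
Proof.
move=> /andP[Hq _] Hr.
have Hin : map Some q \in paths_st src' tgt' s t.
  by apply: path_in; rewrite path_lift.
have [m mP /allP mall] := exists_min (pweight w') Hin.
have Sm : shortest src' tgt' w' s t m.
  rewrite /shortest; move: (mP); rewrite mem_filter => /andP[-> _].
  by apply/allP.
have Nm : None \in m.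
  apply/negPn/negP => N; have := Hr (pmap id m); by rewrite pmap_Some // Sm.
rewrite /sigma_e -has_count; apply/hasP; exists m.
  by move: mP; rewrite mem_filter => /andP[].
by rewrite Sm Nm.
Qed.

Definition tm (src tgt : Ed -> V) (w : Ed -> R) s t e : R :=
  if sigma src tgt w s t != 0%N then
    (sigma_e src tgt w s t e)%:R / (sigma src tgt w s t)%:R else 0.
Definition tm' (src tgt : option Ed -> V) (w : option Ed -> R) s t e : R :=
  if sigma src tgt w s t != 0%N then
    (sigma_e src tgt w s t e)%:R / (sigma src tgt w s t)%:R else 0.

Lemma tm'_ge0 s t e : 0 <= tm' src' tgt' w' s t e.
Proof. by rewrite /tm'; case: ifP => // _; apply: divr_ge0. Qed.

Lemma pair_ineq s t (CH : {set Ed}) :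
  (forall e, 0 < w e) -> 1 <= x ->
  (forall Ch, Ch \in CH -> src Ch = n /\ w Ch <= x) ->
  \sum_(Ch in CH) w Ch * tm src tgt w s t Ch <=
  x * tm' src' tgt' w' s t None + \sum_(Ch in CH) w Ch * tm' src' tgt' w' s t (Some Ch).
Proof.
move=> wpos x1 HC.
have x0 : 0 <= x by apply: le_trans x1.
have R0 : 0 <= x * tm' src' tgt' w' s t None +
   \sum_(Ch in CH) w Ch * tm' src' tgt' w' s t (Some Ch).
  apply: addr_ge0; first by apply: mulr_ge0 => //; apply: tm'_ge0.
  by apply: sumr_ge0 => Ch _; apply: mulr_ge0; [apply: ltW | apply: tm'_ge0].
rewrite /tm.
set sg := sigma src tgt w s t.
case: (posnP sg) => [sg0 | sgpos].
  by rewrite sg0 /= big1 // => Ch _; rewrite mulr0.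
have sgE : (sg != 0%N) = true by rewrite -lt0n.
rewrite -[~~ false]/true.
have sgR : 0 < (sg%:R : R) by rewrite ltr0n.
have HB : \sum_(Ch in CH) w Ch * (sigma_e src tgt w s t Ch)%:R <= x * sg%:R.
  apply: (@le_trans _ _ (\sum_(Ch in CH) x * (sigma_e src tgt w s t Ch)%:R)).
    apply: ler_sum => Ch ChC; apply: ler_wpM2r => //; by case: (HC Ch ChC).
  rewrite -mulr_sumr -natr_sum; apply: ler_wpM2l => //; rewrite ler_nat.
  apply: (@sum_sigma_e_le _ _ _ src tgt w s t CH n) => // Ch ChC; by case: (HC Ch ChC).
have LE : \sum_(Ch in CH) w Ch * ((sigma_e src tgt w s t Ch)%:R / sg%:R) =
          (\sum_(Ch in CH) w Ch * (sigma_e src tgt w s t Ch)%:R) / sg%:R.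
  by rewrite mulr_suml; apply: eq_bigr => Ch _; rewrite mulrA.
rewrite LE.
have : has (shortest src tgt w s t) (all_edge_seqs Ed) by rewrite has_count.
case/hasP => q _ Aq.
rewrite /tm' (sigma'_split src tgt w n ni x s t).
set k := sigma_e _ _ _ s t None.
set c := count _ _.
case: (boolP (shortest src' tgt' w' s t (map Some q))) => Sq.
- have HP : forall r, shortest src' tgt' w' s t (map Some r) = shortest src tgt w s t r.
    move=> r; apply/idP/idP; [exact: S_to_A | exact: A_to_S Aq Sq].
  have cE : c = sg by apply: eq_count.
  rewrite cE.
  have -> : (sg + k != 0)%N = true by rewrite -lt0n addn_gt0 sgpos.
  apply: le_trans (mediant sgR (ler0n _ k) HB) _.
  rewrite natrD; apply: lerD => //.
  rewrite mulr_suml; apply: ler_sum => Ch _; rewrite -mulrA.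
  apply: ler_wpM2l; first exact: ltW.
  apply: ler_wpM2r; first by rewrite invr_ge0 addr_ge0 // ler0n.
  rewrite ler_nat; apply: leq_trans (sigma_e'_ge src tgt w n ni x s t Ch).
  by rewrite /sigma_e; apply: eq_leq; apply: eq_count => r; rewrite HP.
- have HP : forall r, ~~ shortest src' tgt' w' s t (map Some r).
    move=> r; apply/negP => Sr; have := A_to_S (S_to_A Sr) Sr Aq.
    by rewrite (negbTE Sq).
  have c0 : c = 0%N.
    apply/eqP; rewrite -leqn0 leqNgt -has_count; apply/hasP => [[r _]].
    by rewrite (negbTE (HP r)).
  have kp := k_pos Aq HP.
  rewrite c0 add0n -lt0n kp.
  have kR : (k%:R : R) != 0 by rewrite pnatr_eq0 -lt0n.
  rewrite divff // mulr1.
  apply: (@le_trans _ _ x).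
    by rewrite ler_pdivrMr.
  rewrite lerDl; apply: sumr_ge0 => Ch _; apply: mulr_ge0; first exact: ltW.
  by apply: divr_ge0.
Qed.

End Pair.

Lemma ebc_tm (R : realFieldType) (V Ed : finType) (src tgt : Ed -> V) (w : Ed -> R) e :
  ebc src tgt w e = (\sum_s \sum_t (if s != t then tm src tgt w s t e else 0))%R.
Proof.
apply: eq_bigr => s _; rewrite big_mkcond; apply: eq_bigr => t _.
by rewrite /tm; case: (s != t); case: (sigma src tgt w s t != 0%N).
Qed.

Lemma ebc_tm' (R : realFieldType) (V Ed : finType) (src tgt : option Ed -> V)
  (w : option Ed -> R) e :
  ebc src tgt w e = (\sum_s \sum_t (if s != t then tm' src tgt w s t e else 0))%R.
Proof.
apply: eq_bigr => s _; rewrite big_mkcond; apply: eq_bigr => t _.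
by rewrite /tm'; case: (s != t); case: (sigma src tgt w s t != 0%N).
Qed.

Lemma swap3 (R : realFieldType) (I V : finType) (P : pred I) (a : I -> R)
  (F : I -> V -> V -> R) :
  (\sum_(i | P i) a i * \sum_s \sum_t F i s t =
   \sum_s \sum_t \sum_(i | P i) a i * F i s t)%R.
Proof.
under eq_bigr => i _ do rewrite mulr_sumr.
rewrite exchange_big /=; apply: eq_bigr => s _.
under eq_bigr => i _ do rewrite mulr_sumr.
by rewrite exchange_big.
Qed.

Local Open Scope ring_scope.

Theorem theorem4 (R : realFieldType) (V Ed : finType)
  (src tgt : Ed -> V) (w : Ed -> R) (n ni : V) (fmax : R) (CH : {set Ed}) :
  (forall e : Ed, 0 < w e) ->
  1 <= fmax ->
  (forall Ch : Ed, Ch \in CH -> src Ch = n /\ (1 <= w Ch <= fmax)) ->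
  ni != n ->
  (forall Ch : Ed, Ch \in CH -> tgt Ch != ni) ->
  exists2 x : R, 1 <= x <= fmax &
    \sum_(Ch in CH) w Ch * ebc src tgt w Ch <=
      x * ebc (add_src src n) (add_tgt tgt ni) (add_w w x) None
      + \sum_(Ch in CH) w Ch
          * ebc (add_src src n) (add_tgt tgt ni) (add_w w x) (Some Ch).
Proof.
move=> wpos f1 HC _ _; exists fmax; first by rewrite f1 lexx.
have HC' : forall Ch, Ch \in CH -> src Ch = n /\ w Ch <= fmax.
  by move=> Ch /HC [-> /andP[_ ->]].
rewrite (eq_bigr _ (fun Ch _ => congr1 (fun y => w Ch * y) (ebc_tm src tgt w Ch))).
rewrite (eq_bigr _ (fun Ch _ => congr1 (fun y => w Ch * y)
   (ebc_tm' (add_src src n) (add_tgt tgt ni) (add_w w fmax) (Some Ch)))).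
rewrite ebc_tm' !swap3 mulr_sumr -big_split /=.
apply: ler_sum => s _; rewrite mulr_sumr -big_split /=.
apply: ler_sum => t _.
case: (s =P t) => st /=.
  by rewrite mulr0 add0r !big1 // => Ch _; rewrite mulr0.
exact: pair_ineq.
Qed.
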